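(* Let $p\in(0,1)$, let $(\mathcal M,d,0)$ be a finite pointed $p$-metric space, $a\in\mathbb R^{\mathcal M\setminus\{0\}}$ and $z\in\mathcal M\setminus\{0\}$ with $a_z=0$. Let $T\in\mathcal T(\mathcal M)$ satisfy $|\mathrm{desc}_T(z)|\ge1$ and put \[T(z,a):=\sum_{y\in\mathrm{desc}_T(z)}|c_T(y,a)|^pd^p(z,y)+\Big|\sum_{y\in\mathrm{desc}_T(z)}c_T(y,a)\Big|^pd^p(\mathrm{pred}_T(z),z).\] Assume that $T(z,a)\ge\sum_{y\in\mathrm{desc}_T(z)}|c_T(y,a)|^pd^p(\mathrm{pred}_T(z),y)$. Then \[T(a)\ge\Big\|\sum_{x\in\mathcal M\setminus\{0,z\}}a_x\delta(x)\Big\|_{\mathcal F_p(\mathcal M\setminus\{z\})}.\]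
   Context: A $p$-metric space is a set with $d$ such that $d^p$ is a metric; pointed means a distinguished point $0$. A $p$-Banach space is a complete vector space with a $p$-norm. $\delta(x)$ is evaluation at $x$ on real functions vanishing at $0$, and $\mathcal F_p(\mathcal M)$ is the completion of $\mathrm{span}\{\delta(x)\}$ under $\|\sum a_i\delta(x_i)\|=\sup\|\sum a_if(x_i)\|_Y$ over $p$-Banach $Y$ and $1$-Lipschitz $f:\mathcal M\to Y$ with $f(0)=0$; $\mathcal M\setminus\{z\}$ carries the restricted metric. $\mathcal T(\mathcal M)$ is the set of trees on $\mathcal M$ rooted at $0$; for $x\ne0$, $\mathrm{pred}_T(x)$ is the neighbour of $x$ on the path to $0$, $e_x^T=\{\mathrm{pred}_T(x),x\}$, $V_x^T$ is the vertex set of the subtree rooted at $x$, and $\mathrm{desc}_T(x)=\{v:\mathrm{pred}_T(v)=x\}$. $c_T(x,a)=\sum_{y\in V_x^T}a_y$ and $T(a)=\big(\sum_{x\in\mathcal M\setminus\{0\}}|c_T(x,a)d(e_x^T)|^p\big)^{1/p}$. *)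

(* Defs.v *)
From HB Require Import structures.
From mathcomp Require Import all_boot all_order all_algebra.
From mathcomp Require Import all_classical all_reals all_analysis.
Set Implicit Arguments. Unset Strict Implicit. Unset Printing Implicit Defensive.
Import Order.TTheory GRing.Theory Num.Theory.
Local Open Scope ring_scope.

Definition pmetric (R : realType) (M : finType) (p : R) (d : M -> M -> R) : Prop :=
  [/\ (forall x y, 0 <= d x y),
      (forall x y, d x y = 0 <-> x = y),
      (forall x y, d x y = d y x) &
      (forall x y w, d x w `^ p <= d x y `^ p + d y w `^ p)].

(* A tree on M rooted at o, given by its predecessor (parent) map pr:
   pr o = o and every vertex reaches the root by iterating pr. *)
Definition is_tree (M : finType) (o : M) (pr : M -> M) : Prop :=
  pr o = o /\ (forall x, exists n : nat, iter n pr x = o).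

Definition subtree (M : finType) (pr : M -> M) (x : M) : {set M} :=
  [set v | [exists n : 'I_#|M|.+1, iter n pr v == x]].

Definition desc (M : finType) (o : M) (pr : M -> M) (x : M) : {set M} :=
  [set v | (v != o) && (pr v == x)].

Definition cT (R : realType) (M : finType) (pr : M -> M) (a : M -> R) (x : M) : R :=
  \sum_(y in subtree pr x) a y.

Definition Tnorm (R : realType) (M : finType) (o : M) (d : M -> M -> R) (p : R)
  (pr : M -> M) (a : M -> R) : R :=
  (\sum_(x | x != o) `| cT pr a x * d (pr x) x | `^ p) `^ p^-1.

Definition Tza (R : realType) (M : finType) (o : M) (d : M -> M -> R) (p : R)
  (pr : M -> M) (a : M -> R) (z : M) : R :=
  \sum_(y in desc o pr z) `| cT pr a y | `^ p * d z y `^ p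
  + `| \sum_(y in desc o pr z) cT pr a y | `^ p * d (pr z) z `^ p.

Definition pBanach (R : realType) (Y : lmodType R) (p : R) (N : Y -> R) : Prop :=
  [/\ (forall y, 0 <= N y),
      (forall y, N y = 0 <-> y = 0),
      (forall (k : R) y, N (k *: y) = `|k| * N y),
      (forall y1 y2, N (y1 + y2) `^ p <= N y1 `^ p + N y2 `^ p) &
      (forall u : nat -> Y,
         (forall e : R, 0 < e -> exists n0 : nat, forall m n : nat,
             (n0 <= m)%N -> (n0 <= n)%N -> N (u m - u n) < e) ->
         exists l : Y, forall e : R, 0 < e -> exists n0 : nat, forall n : nat,
             (n0 <= n)%N -> N (u n - l) < e)].

(* Main.v *)
Require Import Defs.
From HB Require Import structures.
From mathcomp Require Import all_boot all_order all_algebra.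
From mathcomp Require Import all_classical all_reals all_analysis.
Import Order.TTheory GRing.Theory Num.Theory.
Local Open Scope ring_scope.

Lemma subtreeP (M : finType) (pr : M -> M) (x v : M) :
  reflect (exists n, iter n pr v = x) (v \in subtree pr x).
Proof.
rewrite inE; apply: (iffP existsP) => [[n /eqP <-]|[n hn]]; first by exists n.
have hc : fconnect pr v x by rewrite -hn fconnect_iter.
have lt : (findex pr v x < #|M|.+1)%N.
  apply: (leq_trans (findex_max hc)); apply: leqW; exact: max_card.
by exists (Ordinal lt); rewrite /= iter_findex.
Qed.

Lemma iter_root (M : finType) (o : M) (pr : M -> M) n :
  pr o = o -> iter n pr o = o.
Proof. by move=> h; elim: n => //= n ->. Qed.

Lemma no_cycle (M : finType) (o : M) (pr : M -> M) (x : M) k :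
  is_tree o pr -> iter k.+1 pr x = x -> x = o.
Proof.
move=> [h0 hr] hk; have [n hn] := hr x.
have hm : forall j, iter (j * k.+1) pr x = x.
  by elim=> [|j IH] //; rewrite mulSn iterD IH hk.
by rewrite -(hm n) -(subnK (leq_pmulr n (ltn0Sn k))) iterD hn iter_root.
Qed.
Arguments no_cycle {M o pr x k}.
Arguments subtreeP {M pr x v}.
Arguments iter_root {M o pr n}.

Lemma F1 (M : finType) (o : M) (pr : M -> M) w u v :
  is_tree o pr -> u \in desc o pr w -> v \in subtree pr u ->
  (v \in subtree pr w) && (v != w).
Proof.
move=> ht; rewrite inE => /andP[uo /eqP pu] /subtreeP[n hn].
apply/andP; split; first by apply/subtreeP; exists n.+1; rewrite /= hn.
apply/eqP => vw; move: hn; rewrite vw => hn.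
have : iter n.+1 pr u = u by rewrite iterSr pu.
by move/(no_cycle ht)/eqP; rewrite (negbTE uo).
Qed.

Lemma F2 (M : finType) (o : M) (pr : M -> M) w v :
  is_tree o pr -> w != o -> (v \in subtree pr w) -> v != w ->
  exists2 u, u \in desc o pr w & v \in subtree pr u.
Proof.
move=> [h0 hr] wo /subtreeP[[|m] hm] vw; first by rewrite -hm eqxx in vw.
exists (iter m pr v); last by apply/subtreeP; exists m.
rewrite inE -hm eqxx andbT; apply/eqP => e.
by move: hm wo; rewrite /= e h0 => <-; rewrite eqxx.
Qed.

Lemma F3 (M : finType) (o : M) (pr : M -> M) w u u' v :
  is_tree o pr -> u \in desc o pr w -> u' \in desc o pr w ->
  v \in subtree pr u -> v \in subtree pr u' -> u = u'.
Proof.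
move=> ht; wlog: u u' / exists n m, [/\ (n <= m)%N, iter n pr v = u & iter m pr v = u'].
  move=> hw hu hu' hv hv'.
  have [n hn] := subtreeP hv; have [m hm] := subtreeP hv'.
  have [le|lt] := leqP n m.
    by apply: hw => //; exists n, m.
  by apply/esym; apply: hw => //; exists m, n; rewrite ltnW.
move=> [n [m [le hn hm]]].
rewrite !inE => /andP[uo /eqP pu] /andP[uo' /eqP pu'] _ _.
move: hm; rewrite -(subnK le) iterD hn.
case: (m - n)%N => [//|j].
rewrite iterSr pu => hj.
have : iter j.+1 pr u' = u' by rewrite iterSr pu'.
by move/(no_cycle ht)/eqP; rewrite (negbTE uo').
Qed.

Arguments F1 {M o pr w u v}.
Arguments F2 {M o pr w v}.
Arguments F3 {M o pr w u u' v}.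

Lemma cT_decomp (R : realType) (M : finType) (o : M) (pr : M -> M) (a : M -> R) w :
  is_tree o pr -> w != o ->
  cT pr a w = a w + \sum_(u in desc o pr w) cT pr a u.
Proof.
move=> ht wo; rewrite /cT (bigD1 w) /=; last by apply/subtreeP; exists 0%N.
congr (_ + _).
rewrite (exchange_big_dep predT) //=.
rewrite big_mkcond /=; apply: eq_bigr => v _.
case: ifP => hv.
  have [u hu hvu] := F2 ht wo (proj1 (andP hv)) (proj2 (andP hv)).
  rewrite (big_pred1 u) //= => u'; rewrite /= -/(u' == u).
  apply/andP/eqP => [[h1 h2]|->]; last by [].
  exact: F3 ht h1 hu h2 hvu.
rewrite big_pred0 // => u; apply/negbTE/andP => [[h1 h2]].
by move: (F1 ht h1 h2); rewrite hv.
Qed.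

Lemma Nsum_pow (R : realType) (Y : lmodType R) (p : R) (N : Y -> R) (I : finType)
  (P : pred I) (F : I -> Y) :
  0 < p -> (forall y, N y = 0 <-> y = 0) ->
  (forall y1 y2, N (y1 + y2) `^ p <= N y1 `^ p + N y2 `^ p) ->
  N (\sum_(i | P i) F i) `^ p <= \sum_(i | P i) N (F i) `^ p.
Proof.
move=> p0 N0 Nt.
apply: (big_ind2 (fun y r => N y `^ p <= r)).
- by rewrite (proj2 (N0 0)) // powR0 // gt_eqF.
- by move=> y1 r1 y2 r2 h1 h2; apply: (le_trans (Nt y1 y2)); apply: lerD.
- by [].
Qed.

Theorem lemma3p4 (R : realType) (p : R) (M : finType) (o : M) (d : M -> M -> R)
  (a : M -> R) (z : M) (pr : M -> M) :
  0 < p < 1 -> pmetric p d ->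
  z != o -> a z = 0 ->
  is_tree o pr -> (1 <= #|desc o pr z|)%N ->
  \sum_(y in desc o pr z) `| cT pr a y | `^ p * d (pr z) y `^ p <= Tza o d p pr a z ->
  forall (Y : lmodType R) (N : Y -> R), pBanach p N ->
  forall f : M -> Y, f o = 0 ->
  (forall x y, x != z -> y != z -> N (f x - f y) <= d x y) ->
  N (\sum_(x | (x != o) && (x != z)) a x *: f x) <= Tnorm o d p pr a.
Proof.
move=> /andP[p0 p1] [d0 d00 dsym dtri] zo az ht hdesc hyp Y N [N0 N00 NZ Ntri _] f fo fL.
have przz : pr z != z.
  apply/eqP => e; have := @no_cycle _ _ _ z 0 ht; rewrite /= e => /(_ erefl).
  by move/eqP; rewrite (negbTE zo).
have oz : (o == z) = false by rewrite eq_sym (negbTE zo).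
pose g x := if x == z then f (pr z) else f x.
have go : g o = 0 by rewrite /g oz.
have sumA : \sum_(x | (x != o) && (x != z)) a x *: f x = \sum_(x | x != o) a x *: g x.
  rewrite [RHS](bigD1 z) //= az scale0r add0r; apply: eq_bigr => x /andP[_ xz].
  by rewrite /g (negbTE xz).
have sumB : \sum_(x | x != o) a x *: g x =
    \sum_(x | x != o) cT pr a x *: (g x - g (pr x)).
  rewrite [RHS](eq_bigr (fun x => cT pr a x *: g x - cT pr a x *: g (pr x))); last first.
    by move=> x _; rewrite scalerBr.
  rewrite sumrB.
  have -> : \sum_(x | x != o) cT pr a x *: g (pr x) =
      \sum_(w | w != o) (cT pr a w - a w) *: g w.
    rewrite (partition_big pr predT) //=.
    rewrite (bigD1 o) //= [X in X + _]big1 ?add0r; last first.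
      by move=> x /andP[_ /eqP ->]; rewrite go scaler0.
    apply: eq_bigr => w wo.
    rewrite (@cT_decomp _ _ _ _ a w ht wo) (addrC (a w)) addrK scaler_suml.
    apply: eq_big => [x|x /andP[_ /eqP ->]] //; by rewrite inE.
  rewrite -sumrB; apply: eq_bigr => x _.
  by rewrite scalerBl opprB addrC subrK.
rewrite sumA sumB.
pose B x := if x == z then 0 else
  `| cT pr a x | `^ p * d (if pr x == z then pr z else pr x) x `^ p.
pose S := \sum_(x | x != o) `| cT pr a x * d (pr x) x | `^ p.
have pn0 : p != 0 by rewrite gt_eqF.
have stepD : forall x, N (cT pr a x *: (g x - g (pr x))) `^ p <= B x.
  move=> x; rewrite /B /g NZ.
  have [->|xz] := eqVneq x z.
    by rewrite (negbTE przz) subrr (proj2 (N00 0)) // mulr0 powR0.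
  rewrite powRM ?normr_ge0 //; apply: ler_wpM2l; first exact: powR_ge0.
  apply: ge0_ler_powR; rewrite ?nnegrE ?d0 ?N0 ?(ltW p0) //.
  have [e|ne] := eqVneq (pr x) z.
    by rewrite dsym; apply: fL.
  by rewrite dsym; apply: fL.
have stepE : \sum_(x | x != o) B x <= S.
  have E1 : \sum_(x | (x != o) && (pr x == z)) B x =
      \sum_(y in desc o pr z) `|cT pr a y| `^ p * d (pr z) y `^ p.
    apply: eq_big => [x|x /andP[_ /eqP e]]; first by rewrite inE.
    rewrite /B e eqxx; case: eqP => // xz.
    by move: e przz; rewrite xz => ->; rewrite eqxx.
  have E2 : \sum_(x | (x != o) && (pr x != z) && (x != z)) B x =
      \sum_(x | (x != o) && (pr x != z) && (x != z)) `|cT pr a x * d (pr x) x| `^ p.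
    apply: eq_bigr => x /andP[/andP[_ pz] xz].
    by rewrite /B (negbTE xz) (negbTE pz) normrM (ger0_norm (d0 _ _)) powRM.
  have E3 : \sum_(x | (x != o) && (pr x == z)) `|cT pr a x * d (pr x) x| `^ p =
      \sum_(y in desc o pr z) `|cT pr a y| `^ p * d z y `^ p.
    apply: eq_big => [x|x /andP[_ /eqP e]]; first by rewrite inE.
    by rewrite e normrM (ger0_norm (d0 _ _)) powRM.
  have E4 : `|cT pr a z * d (pr z) z| `^ p =
      `|\sum_(y in desc o pr z) cT pr a y| `^ p * d (pr z) z `^ p.
    by rewrite (@cT_decomp _ _ _ _ a z ht zo) az add0r normrM (ger0_norm (d0 _ _)) powRM.
  have Bz : B z = 0 by rewrite /B eqxx.
  rewrite /S (bigID (fun x => pr x == z)) [X in _ <= X](bigID (fun x => pr x == z)) /=.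
  rewrite [X in _ + X <= _](bigD1 z) /=; last by rewrite zo przz.
  rewrite [X in _ <= _ + X](bigD1 z) /=; last by rewrite zo przz.
  rewrite E1 E2 E3 E4 Bz add0r addrA lerD2r.
  exact: hyp.
have Nsp := @Nsum_pow _ _ p N _ (fun x => x != o) (fun x => cT pr a x *: (g x - g (pr x))) p0 N00 Ntri.
have key : N (\sum_(x | x != o) cT pr a x *: (g x - g (pr x))) `^ p <= S.
  apply: (le_trans Nsp); apply: (le_trans _ stepE); apply: ler_sum => x _; exact: stepD.
rewrite /Tnorm -/S.
set L := N _.
have -> : L = (L `^ p) `^ p^-1 by rewrite -powRrM mulfV // powRr1 // N0.
apply: ge0_ler_powR; rewrite ?nnegrE ?invr_ge0 ?(ltW p0) ?powR_ge0 //.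
- by rewrite /S sumr_ge0 // => x _; exact: powR_ge0.
- all: exact: key.
Qed.
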